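(* Let $n\ge1$, $\pi\in\Pi_n$, and let $j$ be a closer or a transient of $\pi$. Then $$\mathrm{al}(\varphi(\pi);j)=\mathrm{al}(\pi;j),\qquad \mathrm{cr}(\varphi(\pi);j)=\mathrm{ne}(\pi;j),\qquad \mathrm{ne}(\varphi(\pi);j)=\mathrm{cr}(\pi;j),$$ where $\varphi:\Pi_n\to\Pi_n$ is the map described below. Construction of $\varphi(\pi)$: start with $V'=\emptyset$ and an empty edge set $E'$. For $i=1,\dots,n$: if $i$ is an opener of $\pi$, add $i$ to $V'$; if $i$ is a singleton of $\pi$, do nothing; if $i$ is a closer or transient of $\pi$, let $x$ be the $\gamma_i(\pi)$-th largest element of $V'$, add the edge $(x,i)$ to $E'$, remove $x$ from $V'$, and if $i$ is a transient of $\pi$ add $i$ to $V'$. Then $\varphi(\pi)$ is the partition of $[n]$ whose edge set is $E'$.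
   Context: A partition of $[n]=\{1,\dots,n\}$ is a set of pairwise disjoint nonempty subsets (blocks) whose union is $[n]$; $\Pi_n$ is the set of partitions of $[n]$. The edges of $\pi$ are the pairs $(i,j)$, $i<j$, with $i,j$ consecutive elements of the same block; $i$ is the left-hand and $j$ the right-hand endpoint. For a block $B$ with $|B|\ge2$, its minimum is an opener, its maximum a closer, its other elements transients; the element of a one-element block is a singleton. Two edges $e_1=(i_1,j_1)$, $e_2=(i_2,j_2)$ form a crossing with $e_1$ as initial edge if $i_1<i_2<j_1<j_2$; a nesting with $e_2$ as interior edge if $i_1<i_2<j_2<j_1$; an alignment with $e_1$ as initial edge if $i_1<j_1\le i_2<j_2$. For a closer or transient $j$ of $\pi$, $\mathrm{cr}(\pi;j)$ (resp. $\mathrm{ne}(\pi;j)$, $\mathrm{al}(\pi;j)$) is the number of crossings whose initial edge (resp. nestings whose interior edge, alignments whose initial edge) has $j$ as right-hand endpoint. For $i\in[n]$, the vacant vertices of $\pi$ before $i$ are the elements $x\le i-1$ that are the left endpoint of an edge $(x,y)$ of $\pi$ with $y\ge i$. For $i$ a closer or transient with edge $(j,i)$, $j<i$, $\gamma_i(\pi)$ is the rank of $j$ among the vacant vertices before $i$ in increasing order. (The construction of $\varphi$ is well defined and $\varphi(\pi)$ has the same closers and transients as $\pi$.) *)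

(* Defs.v *)
(* Ground set [n] = {1,...,n} is modelled by 'I_n = {0,...,n-1}
   via the order-preserving shift k |-> k+1; all notions below depend only on the
   order, so nothing changes. *)
From mathcomp Require Import all_boot all_order.
Set Implicit Arguments. Unset Strict Implicit. Unset Printing Implicit Defensive.

Section Partitions.
Variable n : nat.
Local Notation T := 'I_n.
Implicit Types (P : {set {set T}}) (i j x y : T).

Definition is_edge P i j : bool :=
  [&& i < j, j \in pblock P i &
      [forall k : T, (k \in pblock P i) ==> ~~ ((i < k) && (k < j))]].

Definition is_opener P i : bool :=
  (2 <= #|pblock P i|) && [forall k : T, (k \in pblock P i) ==> (i <= k)].
Definition is_closer P i : bool :=
  (2 <= #|pblock P i|) && [forall k : T, (k \in pblock P i) ==> (k <= i)].
Definition is_transient P i : bool :=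
  (2 <= #|pblock P i|) && ~~ is_opener P i && ~~ is_closer P i.
Definition is_singleton P i : bool := #|pblock P i| == 1.

Definition cr P j : nat :=
  #|[set q : (T * T) * (T * T) |
      [&& is_edge P q.1.1 q.1.2, is_edge P q.2.1 q.2.2, q.1.2 == j &
          [&& q.1.1 < q.2.1, q.2.1 < q.1.2 & q.1.2 < q.2.2]]]|.
Definition ne P j : nat :=
  #|[set q : (T * T) * (T * T) |
      [&& is_edge P q.1.1 q.1.2, is_edge P q.2.1 q.2.2, q.2.2 == j &
          [&& q.1.1 < q.2.1, q.2.1 < q.2.2 & q.2.2 < q.1.2]]]|.
Definition al P j : nat :=
  #|[set q : (T * T) * (T * T) |
      [&& is_edge P q.1.1 q.1.2, is_edge P q.2.1 q.2.2, q.1.2 == j &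
          [&& q.1.1 < q.1.2, q.1.2 <= q.2.1 & q.2.1 < q.2.2]]]|.

Definition vacant P i : {set T} :=
  [set x : T | (x < i) && [exists y : T, is_edge P x y && (i <= y)]].

Definition rank_in (S : {set T}) x : nat := #|[set y in S | y <= x]|.

Definition gamma P i : nat :=
  if [pick j | is_edge P j i] is Some j then rank_in (vacant P i) j else 0.

Definition kth_largest (S : {set T}) (k : nat) (d : T) : T :=
  nth d (sort (fun a b : T => b <= a) (enum S)) k.-1.

Definition phi_step P (st : {set T} * seq (T * T)) i : {set T} * seq (T * T) :=
  let: (V, E) := st in
  if is_opener P i then (i |: V, E)
  else if is_closer P i || is_transient P i then
    let x := kth_largest V (gamma P i) i in
    let V1 := V :\ x in
    ((if is_transient P i then i |: V1 else V1), (x, i) :: E)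
  else (V, E).

Definition phi_edges P : seq (T * T) :=
  (foldl (phi_step P) (set0, [::]) (enum 'I_n)).2.

Definition partition_of_edges (E : seq (T * T)) : {set {set T}} :=
  equivalence_partition
    (fun x y => connect (fun a b => ((a, b) \in E) || ((b, a) \in E)) x y)
    [set: T].

Definition phi P : {set {set T}} := partition_of_edges (phi_edges P).

End Partitions.

(* Main.v *)
Require Import Defs.
From mathcomp Require Import all_boot all_order zify.
Set Implicit Arguments. Unset Strict Implicit. Unset Printing Implicit Defensive.

Definition vacn n (e : rel 'I_n) (i : nat) : {set 'I_n} :=
  [set x : 'I_n | (x < i) && [exists y, e x y && (i <= y)]].

Definition good n (e : rel 'I_n) :=
  [/\ (forall a b, e a b -> a < b),
      (forall a b b', e a b -> e a b' -> b = b') &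
      (forall a a' b, e a b -> e a' b -> a = a')].

Definition crg n (e : rel 'I_n) (j : 'I_n) : nat :=
  #|[set q : ('I_n * 'I_n) * ('I_n * 'I_n) |
      [&& e q.1.1 q.1.2, e q.2.1 q.2.2, q.1.2 == j &
          [&& q.1.1 < q.2.1, q.2.1 < q.1.2 & q.1.2 < q.2.2]]]|.
Definition neg n (e : rel 'I_n) (j : 'I_n) : nat :=
  #|[set q : ('I_n * 'I_n) * ('I_n * 'I_n) |
      [&& e q.1.1 q.1.2, e q.2.1 q.2.2, q.2.2 == j &
          [&& q.1.1 < q.2.1, q.2.1 < q.2.2 & q.2.2 < q.1.2]]]|.
Definition alg n (e : rel 'I_n) (j : 'I_n) : nat :=
  #|[set q : ('I_n * 'I_n) * ('I_n * 'I_n) |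
      [&& e q.1.1 q.1.2, e q.2.1 q.2.2, q.1.2 == j &
          [&& q.1.1 < q.1.2, q.1.2 <= q.2.1 & q.2.1 < q.2.2]]]|.

Lemma crg_count n (e : rel 'I_n) j0 j : good e -> e j0 j ->
  crg e j = #|[set c in vacn e j | j0 < c]|.
Proof.
case=> lt oU iU ej.
rewrite /crg.
set A := (X in #|X| = _).
have -> : [set c in vacn e j | j0 < c] = (fun q => q.2.1) @: A.
  apply/setP=> c; rewrite !inE; apply/idP/imsetP.
  - case/andP=> /andP[cj /existsP[d /andP[ecd jd]]] j0c.
    have dj : d != j.
      by apply/eqP=> dj; move: ecd; rewrite dj => /(iU _ _ _ ej) E; move: j0c; rewrite E ltnn.
    exists ((j0, j), (c, d)) => //.
    rewrite inE /= ej ecd eqxx j0c cj /=.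
    by rewrite ltn_neqAle jd andbT; apply: contra dj => /eqP/val_inj ->.
  - case=> [[[a b] [c' d]]]; rewrite inE /= => /and4P[eab ecd /eqP bj /and3P[ac cb bd]] ->.
    subst b; have E := iU _ _ _ eab ej; subst a.
    rewrite ac cb andbT /=; apply/existsP; exists d; rewrite ecd /=.
    by rewrite ltnW.
rewrite card_in_imset //.
move=> [[a b] [c d]] [[a' b'] [c' d']]; rewrite !inE /=.
move=> /and4P[eab ecd /eqP bj _] /and4P[eab' ecd' /eqP bj' _] /= cc.
subst b b' c'.
have aa := iU _ _ _ eab (eab'). 
by rewrite aa (oU _ _ _ ecd ecd').
Qed.

Lemma neg_count n (e : rel 'I_n) j0 j : good e -> e j0 j ->
  neg e j = #|[set c in vacn e j | c < j0]|.
Proof.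
case=> lt oU iU ej.
rewrite /neg.
set A := (X in #|X| = _).
have -> : [set c in vacn e j | c < j0] = (fun q => q.1.1) @: A.
  apply/setP=> c; rewrite !inE; apply/idP/imsetP.
  - case/andP=> /andP[cj /existsP[d /andP[ecd jd]]] cj0.
    have dj : d != j.
      by apply/eqP=> dj; move: ecd; rewrite dj => /(iU _ _ _ ej) E; move: cj0; rewrite E ltnn.
    exists ((c, d), (j0, j)) => //.
    rewrite inE /= ej ecd eqxx cj0 (lt _ _ ej) /=.
    by rewrite ltn_neqAle jd andbT; apply: contra dj => /eqP/val_inj ->.
  - case=> [[[a b] [c' d]]]; rewrite inE /= => /and4P[eab ecd /eqP bj /and3P[ac cb bd]] ->.
    subst d; have E := iU _ _ _ ecd ej; subst c'.
    rewrite ac (ltn_trans ac cb) andbT /=; apply/existsP; exists b; rewrite eab /=.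
    by rewrite ltnW.
rewrite card_in_imset //.
move=> [[a b] [c d]] [[a' b'] [c' d']]; rewrite !inE /=.
move=> /and4P[eab ecd /eqP bj _] /and4P[eab' ecd' /eqP bj' _] /= cc.
subst d d' a'.
have aa := iU _ _ _ ecd ecd'. 
by rewrite aa (oU _ _ _ eab eab').
Qed.

Lemma alg_count n (e : rel 'I_n) j0 j : good e -> e j0 j ->
  alg e j = #|[set c : 'I_n | (j <= c) && [exists d, e c d]]|.
Proof.
case=> lt oU iU ej.
rewrite /alg.
set A := (X in #|X| = _).
have -> : [set c : 'I_n | (j <= c) && [exists d, e c d]] = (fun q => q.2.1) @: A.
  apply/setP=> c; rewrite !inE; apply/idP/imsetP.
  - case/andP=> jc /existsP[d ecd].
    exists ((j0, j), (c, d)) => //.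
    by rewrite inE /= ej ecd eqxx jc (lt _ _ ej) (lt _ _ ecd).
  - case=> [[[a b] [c' d]]]; rewrite inE /= => /and4P[eab ecd /eqP bj /and3P[ac cb bd]] ->.
    subst b; rewrite cb /=; apply/existsP; exists d; exact: ecd.
rewrite card_in_imset //.
move=> [[a b] [c d]] [[a' b'] [c' d']]; rewrite !inE /=.
move=> /and4P[eab ecd /eqP bj _] /and4P[eab' ecd' /eqP bj' _] /= cc.
subst b b' c'.
have aa := iU _ _ _ eab (eab'). 
by rewrite aa (oU _ _ _ ecd ecd').
Qed.

Lemma card_set_count n (S : {set 'I_n}) (p : pred 'I_n) :
  #|[set c in S | p c]| = count p (enum S).
Proof.
rewrite -size_filter -(card_uniqP (filter_uniq _ (enum_uniq _))).
by apply: eq_card => c; rewrite !inE mem_filter mem_enum andbC.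
Qed.

Lemma card_split n (S : {set 'I_n}) (y : 'I_n) :
  #|S| = #|[set c in S | c <= y]| + #|[set c in S | y < c]|.
Proof.
rewrite !card_set_count cardE -(count_predC (fun c : 'I_n => c <= y)).
by congr (_ + _); apply: eq_count => c /=; rewrite ltnNge.
Qed.

Lemma card_le_lt n (S : {set 'I_n}) (y : 'I_n) : y \in S ->
  #|[set c in S | c <= y]| = (#|[set c in S | c < y]|).+1.
Proof.
move=> yS; rewrite !card_set_count.
have := count_predUI (fun c : 'I_n => c < y) (pred1 y) (enum S).
rewrite (count_uniq_mem _ (enum_uniq _)) mem_enum yS.
have -> : count (predI (fun c : 'I_n => c < y) (pred1 y)) (enum S) = 0.
  by apply/eqP; rewrite -leqn0 leqNgt -has_count; apply/hasP => [[c _ /= /andP[cy /eqP cE]]]; move: cy; rewrite cE ltnn.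
rewrite addn0 addn1 => <-; apply: eq_count => c /=.
by rewrite leq_eqVlt orbC; congr (_ || _); apply/eqP/eqP => [/val_inj|->].
Qed.

Lemma kth_spec n (S : {set 'I_n}) k d : 0 < k <= #|S| ->
  kth_largest S k d \in S /\ #|[set c in S | kth_largest S k d < c]| = k.-1.
Proof.
case/andP=> k0 kS.
rewrite /kth_largest.
set r := (fun a b : 'I_n => b <= a).
set s := sort r (enum S).
have tot : total r by move=> a b; rewrite /r leq_total.
have tr : transitive r by move=> y x z; rewrite /r => h1 h2; apply: leq_trans h2 h1.
have ss : sorted r s := sort_sorted tot _.
have us : uniq s by rewrite sort_uniq enum_uniq.
have sz : size s = #|S| by rewrite size_sort cardE.
have ms : s =i S by move=> c; rewrite mem_sort mem_enum.
have ks : k.-1 < size s by rewrite sz; lia.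
set x := nth d s k.-1.
have xS : x \in S by rewrite -ms mem_nth.
split=> //.
have pe : perm_eq s (enum S) by apply/permPl; apply: perm_sort.
rewrite card_set_count -(permP pe).
have def : s = take k.-1 s ++ x :: drop k.-1.+1 s.
  by rewrite -drop_nth // -{1}(cat_take_drop k.-1 s).
have sd := ss; rewrite def in sd.
rewrite def count_cat /=.
have -> : count (fun c : 'I_n => x < c) (take k.-1 s) = k.-1.
  rewrite (eq_in_count (a2 := predT)) ?count_predT ?size_take ?ks //.
  move=> y yt /=.
  have : sorted r [:: y; x].
    apply: (@subseq_sorted _ r tr _ _ _ sd).
    by rewrite -cat1s; apply: cat_subseq; rewrite sub1seq // inE eqxx.
  rewrite /= /r andbT => xy.
  rewrite ltn_neqAle xy andbT; apply/negP => /eqP/val_inj xyE.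
  move: us; rewrite def cat_uniq => /and3P[_ /hasPn nh _].
  by have := nh x (mem_head _ _); rewrite /= xyE yt.
rewrite ltnn add0n.
have -> : count (fun c : 'I_n => x < c) (drop k.-1.+1 s) = 0.
  apply/eqP; rewrite -leqn0 leqNgt -has_count; apply/hasP => [[z zd /= xz]].
  have : sorted r [:: x; z].
    apply: (@subseq_sorted _ r tr _ _ _ sd).
    have := @cat_subseq _ [::] [:: x; z] (take k.-1 s) (x :: drop k.-1.+1 s) (sub0seq _).
    by rewrite cat0s; apply; rewrite /= eqxx sub1seq.
  by rewrite /= /r andbT leqNgt xz.
by rewrite addn0.
Qed.


Lemma edges_partition n (E : seq ('I_n * 'I_n)) :
  good (fun a b => (a, b) \in E) ->
  forall a b, is_edge (partition_of_edges E) a b = ((a, b) \in E).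
Proof.
case=> lt oU iU.
pose f (x : 'I_n) : 'I_n := if [pick y | (x, y) \in E] is Some y then y else x.
have edge_f : forall x y : 'I_n, (x, y) \in E -> f x = y.
  move=> x y h; rewrite /f; case: pickP => [y' h'|/(_ y)]; [exact: oU h' h | by rewrite h].
have f_edge : forall x : 'I_n, f x != x -> (x, f x) \in E.
  by move=> x; rewrite /f; case: pickP => [y' -> //|_]; rewrite eqxx.
have f_ge : forall x : 'I_n, x <= f x.
  by move=> x; case: (eqVneq (f x) x) => [->//|/f_edge /lt /ltnW].
have iter_ge : forall k (x : 'I_n), x <= iter k f x.
  by move=> k x; elim: k => //= k IH; apply: leq_trans IH (f_ge _).
have iter_fix : forall k (x : 'I_n), f x = x -> iter k f x = x.
  by move=> k x fx; elim: k => //= k ->.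
pose R (x y : 'I_n) := exists k, iter k f x = y.
have R_conv : forall m k l (x y z : 'I_n), k + l <= m -> iter k f x = z -> iter l f y = z -> R x y \/ R y x.
  elim=> [|m IH] k l x y z hkl hx hy.
    have k0 : k = 0 by lia.
    have l0 : l = 0 by lia.
    by subst k l; left; exists 0; move: hx hy => /= -> ->.
  case: k hx hkl => [|k] hx hkl; first by right; exists l; rewrite hy -hx.
  case: l hy hkl => [|l] hy hkl; first by left; exists k.+1; rewrite hx -hy.
  case: (eqVneq (f (iter k f x)) (iter k f x)) => [fx|nfx].
    by apply: (IH k l.+1 x y z); [lia | rewrite -fx | exact: hy].
  case: (eqVneq (f (iter l f y)) (iter l f y)) => [fy|nfy].
    by apply: (IH k.+1 l x y z); [lia | exact: hx | rewrite -fy].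
  have e1 := f_edge _ nfx; have e2 := f_edge _ nfy.
  rewrite /= in hx hy; rewrite hx in e1; rewrite hy in e2.
  apply: (IH k l x y (iter k f x)) => //; first lia.
  exact: esym (iU _ _ _ e1 e2).
have R_fwd : forall x y z : 'I_n, R x y -> R x z -> R y z \/ R z y.
  move=> x y z [k hk] [l hl]; case: (leqP k l) => kl.
    by left; exists (l - k); rewrite -hk -iterD subnK.
  by right; exists (k - l); rewrite -hl -iterD subnK // ltnW.
have R_trans : forall x y z : 'I_n, R x y -> R y z -> R x z.
  by move=> x y z [k hk] [l hl]; exists (l + k); rewrite iterD hk.
pose S (x y : 'I_n) := R x y \/ R y x.
have S_trans : forall x y z : 'I_n, S x y -> S y z -> S x z.
  move=> x y z [hxy|hyx] [hyz|hzy].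
  - by left; apply: R_trans hxy hyz.
  - by case: hxy hzy => k hk [l hl]; apply: (R_conv (k + l) k l x z y).
  - exact: R_fwd hyx hyz.
  - by right; apply: R_trans hzy hyx.
set er := (fun a b : 'I_n => ((a, b) \in E) || ((b, a) \in E)).
have conn_S : forall x y : 'I_n, connect er x y -> S x y.
  move=> x y /connectP[p pp ->]; elim: p x pp => [|w p IH] x /=.
    by move=> _; left; exists 0.
  case/andP=> exw pw; apply: S_trans (IH _ pw).
  by case/orP: exw => h; [left|right]; exists 1; rewrite /= (edge_f _ _ h).
have symer : connect_sym er.
  by apply: sym_connect_sym => x y; rewrite /er orbC.
have R_conn : forall x y : 'I_n, R x y -> connect er x y.
  move=> x y [k <-]; elim: k => [|k IH] /=; first exact: connect0.
  apply: connect_trans IH _.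
  case: (eqVneq (f (iter k f x)) (iter k f x)) => [->|h]; first exact: connect0.
  by apply: connect1; rewrite /er f_edge.
have eqR : {in [set: 'I_n] & &, equivalence_rel (fun x y => connect er x y)}.
  move=> x y z _ _ _; split; first exact: connect0.
  move=> hxy; apply/idP/idP => h.
    by apply: connect_trans h; rewrite symer.
  exact: connect_trans hxy h.
have pbQ : forall x y : 'I_n, (y \in pblock (partition_of_edges E) x) = connect er x y.
  by move=> x y; apply: (pblock_equivalence_partition eqR); rewrite in_setT.
move=> a b; rewrite /is_edge pbQ; apply/idP/idP.
  case/and3P=> ab cab /forallP nob.
  case: (conn_S _ _ cab) => [[k hk] | [k hk]]; last first.
    by have := iter_ge k b; rewrite hk; lia.
  case: k hk => [|k] hk; first by move: ab; rewrite -hk /= ltnn.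
  case: (eqVneq (f a) a) => [fa|nfa].
    by move: ab; rewrite -hk /= iter_fix // fa ltnn.
  have efa := f_edge _ nfa.
  have fab : f a <= b by rewrite -hk iterSr iter_ge.
  case: (ltngtP (f a) b) fab => [fab _|fab|fe _]; last by rewrite -(val_inj fe).
    have := nob (f a); rewrite pbQ (connect1 (e := er)) /=; last by rewrite /er efa.
    by rewrite fab (lt _ _ efa).
  by [].
move=> h; have ab := lt _ _ h.
rewrite ab (connect1 (e := er)) /=; last by rewrite /er h.
apply/forallP => k; apply/implyP; rewrite pbQ => ck; apply/negP => /andP[ak kb].
case: (conn_S _ _ ck) => [[m hm] | [m hm]].
  case: m hm => [|m] hm; first by move: ak; rewrite -hm ltnn.
  have := iter_ge m (f a); rewrite -iterSr hm (edge_f _ _ h); lia.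
by have := iter_ge m k; rewrite hm; lia.
Qed.


Lemma pbl n (P : {set {set 'I_n}}) (hP : partition P [set: 'I_n]) x : x \in pblock P x.
Proof. by case/and3P: hP => /eqP cov _ _; rewrite mem_pblock cov in_setT. Qed.

Lemma pbs n (P : {set {set 'I_n}}) (hP : partition P [set: 'I_n]) x y :
  y \in pblock P x -> pblock P y = pblock P x.
Proof. by case/and3P: hP => _ tI _ h; apply: same_pblock. Qed.

Lemma good_P n (P : {set {set 'I_n}}) (hP : partition P [set: 'I_n]) :
  good (is_edge P).
Proof.
split.
- by move=> a b /and3P[].
- move=> a b b' /and3P[ab bB /forallP nb] /and3P[ab' bB' /forallP nb'].
  case: (ltngtP b b') => [lt|lt|/val_inj //].
    by have := nb' b; rewrite bB ab lt.
  by have := nb b'; rewrite bB' ab' lt.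
- move=> a a' b /and3P[ab bB /forallP nb] /and3P[ab' bB' /forallP nb'].
  have e1 := pbs hP bB; have e2 := pbs hP bB'.
  case: (ltngtP a a') => [lt|lt|/val_inj //].
    by have := nb a'; rewrite -e1 e2 pbl // lt ab'.
  by have := nb' a; rewrite -e2 e1 pbl // lt ab.
Qed.

Lemma op_not_cl n (P : {set {set 'I_n}}) i : is_opener P i -> ~~ is_closer P i.
Proof.
case/andP=> /card_gt1P[x [y [xB yB xy]]] /forallP ho.
apply/negP => /andP[_ /forallP hc].
move: (ho x) (hc x) (ho y) (hc y); rewrite xB yB /= => h1 h2 h3 h4.
have E : x = y by apply: ord_inj; lia.
by move: xy; rewrite E eqxx.
Qed.

Lemma LP_iff n (P : {set {set 'I_n}}) (hP : partition P [set: 'I_n]) i :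
  (is_opener P i || is_transient P i) = [exists y, is_edge P i y].
Proof.
have iB := pbl hP i.
have step1 : (is_opener P i || is_transient P i) = [exists k, (k \in pblock P i) && (i < k)].
  apply/idP/idP.
    move=> h.
    have [c2 nc] : (2 <= #|pblock P i|) /\ ~~ is_closer P i.
      case/orP: h => [ho|/andP[/andP[-> _] ->] //]; split; last exact: op_not_cl.
      by case/andP: ho.
    move: nc; rewrite /is_closer c2 /= negb_forall => /existsP[k].
    by rewrite negb_imply -ltnNge => hk; apply/existsP; exists k.
  case/existsP=> k /andP[kB ik].
  have c2 : 2 <= #|pblock P i|.
    apply/card_gt1P; exists i, k; split=> //.
    by apply/eqP=> e; move: ik; rewrite e ltnn.
  have nc : ~~ is_closer P i.
    by rewrite /is_closer c2 /= negb_forall; apply/existsP; exists k; rewrite kB -ltnNge.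
  rewrite /is_transient c2 nc /= andbT.
  by case: (is_opener P i).
rewrite step1; apply/idP/idP.
  case/existsP=> k0 hk0.
  case: (@arg_minnP _ k0 (fun k : 'I_n => (k \in pblock P i) && (i < k)) (fun k : 'I_n => val k) hk0) => k /andP[kB ik] kmin.
  apply/existsP; exists k; rewrite /is_edge ik kB /=.
  apply/forallP => m; apply/implyP => mB; apply/negP => /andP[im mk].
  by have := kmin m; rewrite mB im leqNgt mk => /(_ isT).
case/existsP=> y /and3P[iy yB _]; apply/existsP; exists y; by rewrite yB iy.
Qed.

Lemma RP_iff n (P : {set {set 'I_n}}) (hP : partition P [set: 'I_n]) i :
  (is_closer P i || is_transient P i) = [exists a, is_edge P a i].
Proof.
have iB := pbl hP i.
have step1 : (is_closer P i || is_transient P i) = [exists k, (k \in pblock P i) && (k < i)].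
  apply/idP/idP.
    move=> h.
    have [c2 nc] : (2 <= #|pblock P i|) /\ ~~ is_opener P i.
      case/orP: h => [ho|/andP[/andP[-> ->] _] //]; split; last first.
        by apply: contraL ho => /op_not_cl.
      by case/andP: ho.
    move: nc; rewrite /is_opener c2 /= negb_forall => /existsP[k].
    by rewrite negb_imply -ltnNge => hk; apply/existsP; exists k.
  case/existsP=> k /andP[kB ik].
  have c2 : 2 <= #|pblock P i|.
    apply/card_gt1P; exists i, k; split=> //.
    by apply/eqP=> e; move: ik; rewrite e ltnn.
  have nc : ~~ is_opener P i.
    by rewrite /is_opener c2 /= negb_forall; apply/existsP; exists k; rewrite kB -ltnNge.
  rewrite /is_transient c2 nc /= .
  by case: (is_closer P i).
rewrite step1; apply/idP/idP.
  case/existsP=> k0 hk0.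
  case: (@arg_maxnP _ k0 (fun k : 'I_n => (k \in pblock P i) && (k < i)) (fun k : 'I_n => val k) hk0) => k /andP[kB ik] kmax.
  have iB' : i \in pblock P k by rewrite (pbs hP kB).
  apply/existsP; exists k; rewrite /is_edge ik iB' /= (pbs hP kB).
  apply/forallP => m; apply/implyP => mB; apply/negP => /andP[km mi].
  by have := kmax m; rewrite mB mi /= => /(_ isT); rewrite leqNgt km.
case/existsP=> y /and3P[iy yB _]; apply/existsP; exists y.
by rewrite (pbs hP yB) pbl // iy.
Qed.


Definition LP n (P : {set {set 'I_n}}) i := is_opener P i || is_transient P i.
Definition RP n (P : {set {set 'I_n}}) i := is_closer P i || is_transient P i.

Lemma step_eq n (P : {set {set 'I_n}}) V E i :
  phi_step P (V, E) i =
  if RP P i then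
    ((if LP P i then i |: (V :\ kth_largest V (gamma P i) i) else V :\ kth_largest V (gamma P i) i),
     (kth_largest V (gamma P i) i, i) :: E)
  else ((if LP P i then i |: V else V), E).
Proof.
rewrite /phi_step /RP /LP.
case ho: (is_opener P i).
  have nc := op_not_cl ho; rewrite (negbTE nc) /is_transient ho /= andbF.
  by [].
by rewrite /=; case: (is_closer P i); case: (is_transient P i).
Qed.

Lemma neq_ord n (c t : 'I_n) : c != t -> (c : nat) <> t.
Proof. by move=> h e; move/eqP: h; apply; apply: ord_inj. Qed.

Lemma vac_stepR n (P : {set {set 'I_n}}) (hP : partition P [set: 'I_n]) (t j0 : 'I_n) :
  is_edge P j0 t ->
  vacn (is_edge P) t.+1 =
  if LP P t then t |: (vacn (is_edge P) t :\ j0) else vacn (is_edge P) t :\ j0.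
Proof.
move=> ej.
have [lt oU iU] := good_P hP.
have j0t := lt _ _ ej.
apply/setP => c.
have LPt : LP P t = [exists y, is_edge P t y] by rewrite /LP LP_iff.
case: (eqVneq c t) => [->|ct].
  rewrite LPt; case: ifP => hL; rewrite !inE ?eqxx ?ltnSn /=.
    case/existsP: hL => y ety; apply/existsP; exists y; by rewrite ety (lt _ _ ety).
  rewrite ltnn !andbF; apply/negbTE; move/negbT: hL; apply: contra.
  by case/existsP=> y /andP[ety _]; apply/existsP; exists y.
have ct' := neq_ord ct.
have -> : (c \in (if LP P t then t |: (vacn (is_edge P) t :\ j0) else vacn (is_edge P) t :\ j0))
   = (c \in vacn (is_edge P) t :\ j0).
  by case: ifP => _; rewrite ?inE ?(negbTE ct).
rewrite !inE; apply/idP/idP.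
  case/andP=> ct1 /existsP[y /andP[ecy ty]].
  have -> : c != j0.
    by apply/eqP => E; subst c; have E := oU _ _ _ ecy ej; subst y; rewrite ltnn in ty.
  have -> /= : c < t by lia.
  by apply/existsP; exists y; rewrite ecy ltnW.
case/and3P=> cj ct1 /existsP[y /andP[ecy ty]].
rewrite ltnS ltnW //=; apply/existsP; exists y; rewrite ecy /=.
have yt : (y : nat) <> t.
  move=> E; have E' : y = t by apply: ord_inj.
  by subst y; move: cj; rewrite (iU _ _ _ ecy ej) eqxx.
lia.
Qed.

Lemma vac_stepN n (P : {set {set 'I_n}}) (hP : partition P [set: 'I_n]) (t : 'I_n) :
  ~~ RP P t ->
  vacn (is_edge P) t.+1 =
  if LP P t then t |: vacn (is_edge P) t else vacn (is_edge P) t.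
Proof.
move=> nR.
have [lt oU iU] := good_P hP.
apply/setP => c.
have LPt : LP P t = [exists y, is_edge P t y] by rewrite /LP LP_iff.
case: (eqVneq c t) => [->|ct].
  rewrite LPt; case: ifP => hL; rewrite !inE ?eqxx ?ltnSn /=.
    case/existsP: hL => y ety; apply/existsP; exists y; by rewrite ety (lt _ _ ety).
  rewrite ltnn /=; apply/negbTE; move/negbT: hL; apply: contra.
  by case/existsP=> y /andP[ety _]; apply/existsP; exists y.
have ct' := neq_ord ct.
have -> : (c \in (if LP P t then t |: vacn (is_edge P) t else vacn (is_edge P) t))
   = (c \in vacn (is_edge P) t).
  by case: ifP => _; rewrite ?inE ?(negbTE ct).
rewrite !inE; apply/idP/idP.
  case/andP=> ct1 /existsP[y /andP[ecy ty]].
  have -> /= : c < t by lia.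
  by apply/existsP; exists y; rewrite ecy ltnW.
case/andP=> ct1 /existsP[y /andP[ecy ty]].
rewrite ltnS ltnW //=; apply/existsP; exists y; rewrite ecy /=.
have yt : (y : nat) <> t.
  move=> E; have E' : y = t by apply: ord_inj.
  subst y; move: nR; rewrite /RP RP_iff //.
  by move/existsP; apply; exists c.
lia.
Qed.


Definition Inv n (P : {set {set 'I_n}}) (i : nat) (st : {set 'I_n} * seq ('I_n * 'I_n)) : Prop :=
  [/\ (forall a b, (a, b) \in st.2 -> [&& a < b, b < i, RP P b & LP P a]),
      (forall b : 'I_n, b < i -> RP P b -> exists a, (a, b) \in st.2),
      good (fun a b => (a, b) \in st.2),
      (forall c, (c \in st.1) = [&& c < i, LP P c & [forall d, (c, d) \notin st.2]]) &
      #|st.1| = #|vacn (is_edge P) i| ].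

Lemma gamma_spec n (P : {set {set 'I_n}}) (hP : partition P [set: 'I_n]) (t : 'I_n) :
  RP P t -> exists j0, is_edge P j0 t /\
    gamma P t = #|[set y in vacn (is_edge P) t | y <= j0]|.
Proof.
rewrite /RP RP_iff // => /existsP[j0 ej].
rewrite /gamma; case: pickP => [j1 ej1 | /(_ j0)]; last by rewrite ej.
by exists j1.
Qed.

Lemma Inv_step n (P : {set {set 'I_n}}) (hP : partition P [set: 'I_n]) (t : 'I_n) st :
  Inv P t st -> Inv P t.+1 (phi_step P st t).
Proof.
case: st => V E [J1 J2 [gl goU giU] J3 J5].
rewrite step_eq.
have tV : t \notin V by rewrite J3 ltnn.
have tv : t \notin vacn (is_edge P) t by rewrite inE ltnn.
have noT : [forall d, (t, d) \notin E].
  apply/forallP => d; apply/negP => /J1/and4P[td dt _ _]; lia.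
case: ifP => hR.
- have [j0 [ej gE]] := gamma_spec hP hR.
  have [lt oU iU] := good_P hP.
  have j0v : j0 \in vacn (is_edge P) t.
    by rewrite inE (lt _ _ ej) /=; apply/existsP; exists t; rewrite ej leqnn.
  have g1 : 0 < gamma P t <= #|V|.
    have := card_split (vacn (is_edge P) t) j0.
    rewrite gE J5 card_le_lt //; lia.
  have [xV xcnt] := kth_spec t g1.
  move: xV xcnt; move: (kth_largest V (gamma P t) t) => x xV xcnt.
  have := xV; rewrite J3 => /and3P[xt LPx /forallP xno].
  split => /=.
  + move=> a b; rewrite inE => /orP[/eqP[-> ->]|h].
      by rewrite xt ltnSn hR LPx.
    have /and4P[ab bt Rb La] := J1 _ _ h.
    by rewrite ab Rb La andbT /=; lia.
  + move=> b bt Rb; case: (eqVneq b t) => [->|bt'].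
      by exists x; rewrite inE eqxx.
    have bt2 : b < t by have := neq_ord bt'; lia.
    by have [a h] := J2 b bt2 Rb; exists a; rewrite inE h orbT.
  + split.
    * move=> a b; rewrite inE => /orP[/eqP[-> ->]|h]; [exact: xt | exact: gl h].
    * move=> a b b'; rewrite !inE => /orP[/eqP[ea eb]|h] /orP[/eqP[ea' eb']|h'].
      - by rewrite eb eb'.
      - by subst a; move: (xno b'); rewrite h'.
      - by subst a; move: (xno b); rewrite h.
      - exact: goU h h'.
    * move=> a a' b; rewrite !inE => /orP[/eqP[ea eb]|h] /orP[/eqP[ea' eb']|h'].
      - by rewrite ea ea'.
      - by subst b; move: (J1 _ _ h') => /and4P[_ tt _ _]; rewrite ltnn in tt.
      - by subst b; move: (J1 _ _ h) => /and4P[_ tt _ _]; rewrite ltnn in tt.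
      - exact: giU h h'.
  + move=> c; case: (eqVneq c t) => [->|ct].
      have noT' : [forall d, (t, d) \notin (x, t) :: E].
        apply/forallP => d; rewrite inE negb_or (forallP noT d) andbT xpair_eqE negb_and.
        by apply/orP; left; apply/eqP => e; move: xt; rewrite e ltnn.
      by case: ifP => hL; rewrite !inE ?eqxx ?(negbTE tV) ?andbF /= ?ltnSn ?hL ?noT'.
    have ct2 := neq_ord ct.
    have e1 : (c < t.+1) = (c < t) by apply/idP/idP => ?; lia.
    have e2 : [forall d, (c, d) \notin (x, t) :: E] = (c != x) && [forall d, (c, d) \notin E].
      apply/forallP/andP.
        move=> h; split.
          by apply/eqP => cx; move: (h t); rewrite inE cx eqxx.
        by apply/forallP => d; move: (h d); rewrite inE negb_or => /andP[].
      case=> cx /forallP h d; rewrite inE negb_or h andbT xpair_eqE negb_and.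
      by rewrite cx.
    have -> : (c \in (if LP P t then t |: (V :\ x) else V :\ x)) = (c != x) && (c \in V).
      by case: ifP => _; rewrite !inE ?(negbTE ct).
    rewrite J3 e1 e2.
    by case: (c < t); case: (LP P c); case: (c != x).
  + rewrite (vac_stepR hP ej).
    have h1 := cardsD1 x V; have h2 := cardsD1 j0 (vacn (is_edge P) t).
    rewrite xV /= in h1; rewrite j0v /= in h2.
    have e : #|V :\ x| = #|vacn (is_edge P) t :\ j0| by move: J5; rewrite h1 h2 => -[].
    case: (LP P t); last exact: e.
    by rewrite !cardsU1 !in_setD1 (negbTE tV) (negbTE tv) !andbF /= e.
- split => /=.
  + move=> a b h; have /and4P[ab bt Rb La] := J1 _ _ h.
    by rewrite ab Rb La andbT /=; lia.
  + move=> b bt Rb; case: (eqVneq b t) => [bE|bt'].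
      by move: hR; rewrite -bE Rb.
    have bt2 : b < t by have := neq_ord bt'; lia.
    exact: J2 b bt2 Rb.
  + by split.
  + move=> c; case: (eqVneq c t) => [->|ct].
      by case: ifP => hL; rewrite ?inE ?eqxx ?(negbTE tV) /= ?ltnSn ?hL ?noT ?andbF.
    have ct2 := neq_ord ct.
    have e1 : (c < t.+1) = (c < t) by apply/idP/idP => ?; lia.
    have -> : (c \in (if LP P t then t |: V else V)) = (c \in V).
      by case: ifP => _; rewrite ?inE ?(negbTE ct).
    by rewrite J3 e1.
  + rewrite (vac_stepN hP (negbT hR)).
    case: (LP P t); last exact: J5.
    by rewrite !cardsU1 (negbTE tV) (negbTE tv) J5.
Qed.


Definition stt n (P : {set {set 'I_n}}) (i : nat) :=
  foldl (phi_step P) (set0, [::]) (take i (enum 'I_n)).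

Lemma stt_succ n (P : {set {set 'I_n}}) (t : 'I_n) :
  stt P t.+1 = phi_step P (stt P t) t.
Proof.
rewrite /stt (take_nth t); last by rewrite size_enum_ord.
by rewrite foldl_rcons nth_ord_enum.
Qed.

Lemma Inv_all n (P : {set {set 'I_n}}) (hP : partition P [set: 'I_n]) i :
  i <= n -> Inv P i (stt P i).
Proof.
elim: i => [|i IH] hi.
  rewrite /stt take0 /=; split.
  - by move=> a b; rewrite in_nil.
  - by [].
  - split.
    + by move=> a b; rewrite in_nil.
    + by move=> a b c; rewrite in_nil.
    + by move=> a c b; rewrite in_nil.
  - by move=> c; rewrite inE.
  - have -> : vacn (is_edge P) 0 = set0 by apply/setP => c; rewrite !inE.
    by rewrite cards0.
have ilt : i < n by [].
have := stt_succ P (Ordinal ilt); rewrite /= => ->.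
exact: (Inv_step hP (t := Ordinal ilt) (IH (ltnW ilt))).
Qed.

Arguments stt : simpl never.

Lemma stt_mono n (P : {set {set 'I_n}}) i k :
  i + k <= n -> exists s : seq ('I_n * 'I_n), (stt P (i + k)).2 = s ++ (stt P i).2 /\ all (fun e : 'I_n * 'I_n => i <= e.2) s.
Proof.
elim: k => [|k IH] hk; first by exists [::]; rewrite addn0.
have ilt : i + k < n by rewrite addnS in hk.
have [s [hs als]] := IH (ltnW ilt).
have := stt_succ P (Ordinal ilt); rewrite /= => E1.
rewrite addnS E1.
case: (stt P (i + k)) hs => V E hs; simpl in hs.
rewrite step_eq; case: ifP => _ /=.
  exists ((kth_largest V (gamma P (Ordinal ilt)) (Ordinal ilt), Ordinal ilt) :: s).
  by rewrite hs /= leq_addr als.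
by exists s.
Qed.


Lemma step_snd n (P : {set {set 'I_n}}) st t :
  (phi_step P st t).2 =
  if RP P t then (kth_largest st.1 (gamma P t) t, t) :: st.2 else st.2.
Proof. by case: st => V E; rewrite step_eq; case: ifP. Qed.

Theorem lemma2p2 (n : nat) (hn : 0 < n) (P : {set {set 'I_n}})
  (hP : partition P [set: 'I_n]) (j : 'I_n)
  (hj : is_closer P j || is_transient P j) :
  [/\ al (phi P) j = al P j,
      cr (phi P) j = ne P j &
      ne (phi P) j = cr P j].
Proof.
have hR : RP P j := hj.
have EE : phi_edges P = (stt P n).2.
  by rewrite /phi_edges /stt take_oversize // size_enum_ord.
have [J1 J2 gE' J3 J5] := Inv_all hP (leqnn n).
rewrite -EE in J1 J2 gE' J3.
have Vn0 : (stt P n).1 = set0.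
  apply/eqP; rewrite -cards_eq0 J5 cards_eq0; apply/eqP/setP => c; rewrite !inE.
  rewrite (ltn_ord c) /=; apply/negbTE/existsPn => y.
  by rewrite leqNgt ltn_ord andbF.
have eQ : forall a b, is_edge (phi P) a b = ((a, b) \in phi_edges P).
  exact: edges_partition gE'.
have gQ : good (is_edge (phi P)).
  case: gE' => l o i.
  by split=> [a b|a b b'|a a' b]; rewrite !eQ; [exact: l | exact: o | exact: i].
have LQ : forall c, [exists d, is_edge (phi P) c d] = LP P c.
  move=> c; apply/idP/idP.
    by case/existsP=> d; rewrite eQ => /J1 /and4P[_ _ _ ->].
  move=> Lc; apply/existsP.
  have := J3 c; rewrite Vn0 inE (ltn_ord c) Lc /= => /esym /negbT.
  rewrite negb_forall => /existsP[d]; rewrite negbK => h.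
  by exists d; rewrite eQ.
have jn : j <= n by apply: ltnW.
have [J1j J2j gEj J3j J5j] := Inv_all hP jn.
have [j0 [ej gam]] := gamma_spec hP hR.
have gP := good_P hP.
have [lt oU iU] := gP.
have j0v : j0 \in vacn (is_edge P) j.
  by rewrite inE (lt _ _ ej) /=; apply/existsP; exists j; rewrite ej leqnn.
have g1 : 0 < gamma P j <= #|(stt P j).1|.
  have := card_split (vacn (is_edge P) j) j0.
  rewrite gam J5j card_le_lt //; lia.
have [xV xcnt] := kth_spec j g1.
have xE : (kth_largest (stt P j).1 (gamma P j) j, j) \in phi_edges P.
  have hk : j.+1 + (n - j.+1) <= n by rewrite subnKC.
  have [s [hs _]] := stt_mono P hk.
  rewrite subnKC // in hs.
  rewrite EE hs mem_cat; apply/orP; right.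
  by rewrite stt_succ step_snd hR inE eqxx.
move: xV xcnt xE; move: (kth_largest (stt P j).1 (gamma P j) j) => x xV xcnt xE.
have exQ : is_edge (phi P) x j by rewrite eQ.
have vQ : vacn (is_edge (phi P)) j = (stt P j).1.
  have hk : j + (n - j) <= n by rewrite subnKC.
  have [s [hs als]] := stt_mono P hk.
  rewrite subnKC // -EE in hs.
  apply/setP => c; rewrite inE J3j; apply/idP/idP.
    case/andP=> cj /existsP[d /andP[ecd jd]]; rewrite eQ in ecd.
    have /and4P[_ _ _ Lc] := J1 _ _ ecd.
    rewrite cj Lc /=; apply/forallP => d'; apply/negP => h.
    have /and4P[_ dj _ _] := J1j _ _ h.
    have h' : (c, d') \in phi_edges P by rewrite hs mem_cat h orbT.
    case: gE' => _ o _; have dd := o _ _ _ ecd h'; subst d'.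
    by rewrite ltnNge jd in dj.
  case/and3P=> cj Lc /forallP no.
  rewrite cj /=; have := LQ c; rewrite Lc => /existsP[d]; rewrite eQ => ecd.
  apply/existsP; exists d; rewrite eQ ecd /=.
  rewrite leqNgt; apply/negP => dj.
  move: ecd; rewrite hs mem_cat => /orP[hin|hin].
    by move/allP: als => /(_ _ hin) /=; rewrite leqNgt dj.
  by move: (no d); rewrite hin.
have alQ : al (phi P) j = alg (is_edge (phi P)) j by [].
have alP : al P j = alg (is_edge P) j by [].
have crQ : cr (phi P) j = crg (is_edge (phi P)) j by [].
have crP : cr P j = crg (is_edge P) j by [].
have neQ : ne (phi P) j = neg (is_edge (phi P)) j by [].
have neP : ne P j = neg (is_edge P) j by [].
split.
- rewrite alQ alP (alg_count gQ exQ) (alg_count gP ej).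
  by apply: eq_card => c; rewrite !inE LQ /LP LP_iff.
- rewrite crQ neP (crg_count gQ exQ) vQ xcnt (neg_count gP ej).
  by rewrite gam card_le_lt.
- rewrite neQ crP (neg_count gQ exQ) vQ (crg_count gP ej).
  have s1 := card_split (stt P j).1 x; have s2 := card_le_lt xV.
  have s3 := card_split (vacn (is_edge P) j) j0; have s4 := card_le_lt j0v.
  move: s1 s2 s3 s4 xcnt gam J5j.
  set a1 := #|(stt P j).1|; set a2 := #|vacn (is_edge P) j|.
  set a3 := #|[set c in (stt P j).1 | c <= x]|; set a4 := #|[set c in (stt P j).1 | c < x]|.
  set a5 := #|[set c in (stt P j).1 | x < c]|; set a6 := #|[set c in vacn (is_edge P) j | c <= j0]|.
  set a7 := #|[set c in vacn (is_edge P) j | j0 < c]|; set a8 := #|[set c in vacn (is_edge P) j | c < j0]|.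
  set g := gamma P j.
  clear; lia.
Qed.
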